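(* Let $(X,Y,R)$ be a random triple with $X\in\mathbb{R}^d$, $Y\in\{0,1\}$, $R\in\{0,1\}$, $0<P(R=1)<1$, with all conditional probabilities $P(R=r\mid X,Y)$, $P(Y=y\mid X,R=r)$ in $(0,1)$. Let $T:\mathbb{R}^d\to\mathbb{R}^k$ be measurable and for $\theta=(\alpha_0,\alpha_1,\beta_0,\beta_1)\in\mathbb{R}\times\mathbb{R}\times\mathbb{R}^k\times\mathbb{R}^k$ set $\omega(x,y;\theta)=\exp(\alpha_y+\beta_y^\top T(x))$, $$\eta_r(x,y;\theta)=\frac{P(R=1)}{P(R=1)+\omega(x,y;\theta)P(R=0)},\qquad \gamma(1\mid x;\theta)=(\alpha_1-\alpha_0)+(\beta_1-\beta_0)^\top T(x).$$ Let $\{\eta_1(\cdot;\xi):\xi\in\Xi\}$ be a family of measurable functions $\mathbb{R}^d\to(0,1)$, and set $$m_0(x;\theta,\xi)=\frac{e^{\gamma(1\mid x;\theta)}\eta_1(x;\xi)}{e^{\gamma(1\mid x;\theta)}\eta_1(x;\xi)+1-\eta_1(x;\xi)}.$$ Let $\tau:\mathbb{R}^d\times\{0,1\}\to\mathbb{R}$ and $m_{0,\tau}(x;\theta,\xi)=\tau(x,0)+\{\tau(x,1)-\tau(x,0)\}m_0(x;\theta,\xi)$. Fix $\theta^\star$ and $\xi^\star\in\Xi$, and assume all expectations below are finite. Define $$\text{a-bias}(\widehat\mu_{0,\mathrm{IW}})=\mathbb{E}\Big[\Big\{\tfrac{R}{P(R=1)}\omega(X,Y;\theta^\star)-\tfrac{1-R}{P(R=0)}\Big\}\tau(X,Y)\Big],\quad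 \text{a-bias}(\widehat\mu_{\mathrm{IW}})=\mathbb{E}\Big[\Big\{\tfrac{R}{\eta_r(X,Y;\theta^\star)}-1\Big\}\tau(X,Y)\Big],$$ $$\text{a-bias}(\widehat\mu_{0,\mathrm{DR}})=\mathbb{E}\Big[\Big\{\tfrac{R}{P(R=1)}\omega(X,Y;\theta^\star)-\tfrac{1-R}{P(R=0)}\Big\}\{\tau(X,Y)-m_{0,\tau}(X;\theta^\star,\xi^\star)\}\Big],$$ $$\text{a-bias}(\widehat\mu_{\mathrm{DR}})=\mathbb{E}\Big[\Big\{\tfrac{R}{\eta_r(X,Y;\theta^\star)}-1\Big\}\{\tau(X,Y)-m_{0,\tau}(X;\theta^\star,\xi^\star)\}\Big].$$ Then: (i) If $\mathbb{E}[R\mid X,Y]=\eta_r(X,Y;\theta^\star)$, then $\text{a-bias}(\widehat\mu_{0,\mathrm{IW}})=\text{a-bias}(\widehat\mu_{\mathrm{IW}})=\text{a-bias}(\widehat\mu_{0,\mathrm{DR}})=\text{a-bias}(\widehat\mu_{\mathrm{DR}})=0$. (ii) If $\gamma(1\mid x)=\gamma(1\mid x;\theta^\star)$ for all $x$ and $\mathbb{E}[Y\mid X,R=0]=m_0(X;\theta^\star,\xi^\star)$, then $\text{a-bias}(\widehat\mu_{0,\mathrm{DR}})=\text{a-bias}(\widehat\mu_{\mathrm{DR}})=0$. Here $\gamma(y\mid x)=\log\Big\{\dfrac{P(R=0\mid Y=y,X=x)\,P(R=1\mid Y=0,X=x)}{P(R=1\mid Y=y,X=x)\,P(R=0\mid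 Y=0,X=x)}\Big\}$ is the true log odds ratio.
   Context: $R=1$ indicates that $Y$ is observed, $R=0$ that it is missing. The quantities ''a-bias'' are the asymptotic biases of importance-weighted (IW) and doubly robust (DR) estimators of $\mathbb{E}[\tau(X,Y)\mid R=0]$ and $\mathbb{E}[\tau(X,Y)]$ whose tilt-parameter estimates converge to $\theta^\star$ and whose outcome-model estimates $\eta_1(\cdot;\widehat\xi)$ of $P(Y=1\mid X,R=1)$ converge to parameter $\xi^\star$; for the purposes of this statement they are defined by the displayed expressions. *)

(* Defs.v *)
From HB Require Import structures.
From mathcomp Require Import all_boot all_order all_algebra.
From mathcomp Require Import all_classical all_reals all_analysis.
Set Implicit Arguments. Unset Strict Implicit. Unset Printing Implicit Defensive.
Import Order.TTheory GRing.Theory Num.Theory.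
Local Open Scope classical_set_scope.
Local Open Scope ring_scope.

(** Covariates live in R^d, represented as [d.-tuple R] with the product
    (= Borel) sigma-algebra provided by MathComp-Analysis. *)

Definition dotk {R : realType} {k : nat} (b t : k.-tuple R) : R :=
  \sum_(i < k) tnth b i * tnth t i.

Record param (R : realType) (k : nat) := Param {
  alpha0 : R; alpha1 : R; beta0 : k.-tuple R; beta1 : k.-tuple R }.

Section Model.
Context {R : realType} {d k : nat} (T : d.-tuple R -> k.-tuple R).

Definition omega (th : param R k) (x : d.-tuple R) (y : bool) : R :=
  expR ((if y then alpha1 th else alpha0 th) +
        dotk (if y then beta1 th else beta0 th) (T x)).

Definition eta_r (pr1 pr0 : R) (th : param R k) (x : d.-tuple R) (y : bool) : R :=
  pr1 / (pr1 + omega th x y * pr0).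

Definition gamma1 (th : param R k) (x : d.-tuple R) : R :=
  (alpha1 th - alpha0 th) + (dotk (beta1 th) (T x) - dotk (beta0 th) (T x)).

(** m_0(x;theta,xi), given the value e = eta_1(x;xi) *)
Definition m0 (th : param R k) (e : d.-tuple R -> R) (x : d.-tuple R) : R :=
  expR (gamma1 th x) * e x / (expR (gamma1 th x) * e x + 1 - e x).

Definition m0tau (tau : d.-tuple R -> bool -> R) (th : param R k)
  (e : d.-tuple R -> R) (x : d.-tuple R) : R :=
  tau x false + (tau x true - tau x false) * m0 th e x.
End Model.

(** True log odds ratio gamma(1|x) computed from (a version of)
    pR x y = P(R=1 | Y=y, X=x):
    log{ P(R=0|Y=1,X=x) P(R=1|Y=0,X=x) / (P(R=1|Y=1,X=x) P(R=0|Y=0,X=x)) }. *)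
Definition gamma_true {R : realType} {V : Type} (pR : V -> bool -> R) (x : V) : R :=
  ln (((1 - pR x true) * pR x false) / (pR x true * (1 - pR x false))).

(** [g] is a version of the conditional expectation E[Z | U], expressed
    by the defining property of conditional expectation: g is measurable
    and E[Z 1{U in B}] = E[g(U) 1{U in B}] for every measurable B. *)
Definition cexp_version {R : realType} {dO : measure_display} {O : measurableType dO}
  {dV : measure_display} {V : measurableType dV}
  (P : probability O R) (Z : O -> R) (U : O -> V) (g : V -> R) : Prop :=
  measurable_fun setT g /\
  forall B : set V, measurable B ->
    (\int[P]_(w in U @^-1` B) (Z w)%:E = \int[P]_(w in U @^-1` B) (g (U w))%:E)%E.

(* Main.v *)
Require Import Defs.
From HB Require Import structures.
From mathcomp Require Import all_boot all_order all_algebra.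
From mathcomp Require Import all_classical all_reals all_analysis.
From mathcomp Require Import measurable_realfun ring.
Import Order.TTheory GRing.Theory Num.Theory.
Local Open Scope classical_set_scope.
Local Open Scope ring_scope.

Section HelpersL.
Local Open Scope ereal_scope.
Import HBNNSimple.
Local Set Implicit Arguments. Local Unset Strict Implicit.
Lemma dens_cov d (W : measurableType d) (R : realType)
  (nu mu : {measure set W -> \bar R}) (g : W -> R) :
  (forall x, 0 <= g x)%R -> measurable_fun setT g ->
  (forall A, measurable A -> nu A = \int[mu]_(x in A) (g x)%:E) ->
  forall (f : W -> \bar R) E, (forall x, 0 <= f x) -> measurable E -> measurable_fun E f ->
  \int[mu]_(x in E) (f x * (g x)%:E) = \int[nu]_(x in E) f x.
Proof.
move=> g0 mg numu f E f0 mE mf.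
have mgE : measurable_fun setT (fun x => (g x)%:E) by exact/measurable_EFinP.
pose h := nnsfun_approx mE mf.
have -> : \int[nu]_(x in E) f x =
    lim (\int[nu]_(x in E) (EFin \o h n) x @[n --> \oo]).
  have fE x : E x -> f x = lim ((EFin \o h n) x @[n --> \oo]).
    by move=> Ex; apply/esym/cvg_lim => //; exact: cvg_nnsfun_approx.
  under eq_integral => x /[!inE] /fE -> //.
  apply: monotone_convergence => //.
  - move=> n; apply/measurable_EFinP.
    by apply: (measurable_funS measurableT) => //; exact/measurable_funP.
  - by move=> n x Ex //=; rewrite lee_fin.
  - by move=> x Ex a b ab; rewrite lee_fin; exact/lefP/nd_nnsfun_approx.
have -> : \int[mu]_(x in E) (f x * (g x)%:E) =
    lim (\int[mu]_(x in E) ((EFin \o h n) x * (g x)%:E) @[n --> \oo]).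
  have fg x : E x -> f x * (g x)%:E = lim (((EFin \o h n) x * (g x)%:E) @[n --> \oo]).
    by move=> Ex; apply/esym/cvg_lim => //; apply: cvgeZr;
      [by []|exact: cvg_nnsfun_approx].
  under eq_integral => x /[!inE] /fg -> //.
  apply: monotone_convergence => [//| | |].
  - move=> n; apply/emeasurable_funM; apply/measurable_funTS.
      exact/measurable_EFinP.
    exact: mgE.
  - by move=> n x Ex /=; rewrite mule_ge0 ?lee_fin.
  - by move=> x Ex a b ab/=; rewrite lee_wpmul2r ?lee_fin//; exact/lefP/nd_nnsfun_approx.
suff suf n : \int[mu]_(x in E) ((EFin \o h n) x * (g x)%:E) =
    \int[nu]_(x in E) (EFin \o h n) x.
  by under eq_fun do rewrite suf.
transitivity (\int[nu]_(x in E)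
   (\sum_(y \in range (h n)) (y * \1_(h n @^-1` [set y]) x)%:E)); last first.
  by apply: eq_integral => t tE; rewrite /= fimfunE -fsumEFin.
have indich m r : measurable_fun E (fun x => (r * \1_(h m @^-1` [set r]) x)%:E).
  by apply: (measurable_comp measurableT) => //; exact: measurable_funM.
rewrite ge0_integral_fsum//; last by move=> m y Ey; exact: nnfun_muleindic_ge0.
transitivity (\int[mu]_(x in E) (\sum_(y \in range (h n))
    (y * \1_(h n @^-1` [set y]) x)%:E * (g x)%:E)).
  under [RHS]eq_integral => x xE.
    rewrite -ge0_mule_fsuml => [|y]; last exact: nnfun_muleindic_ge0.
    rewrite fsumEFin // -(fimfunE _ x); over.
  by [].
rewrite ge0_integral_fsum//; last 2 first.
  - move=> y; apply: emeasurable_funM => //; apply: measurable_funTS.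
    exact: mgE.
  - by move=> m y Ey; apply: mule_ge0; [exact: nnfun_muleindic_ge0|rewrite lee_fin].
apply: eq_fsbigr => r rhn.
under [RHS]eq_integral do rewrite EFinM.
rewrite integralZl_indic_nnsfun => //.
under eq_integral do rewrite EFinM -muleA.
rewrite ge0_integralZl//.
- congr (_ * _).
  under eq_integral do rewrite muleC.
  rewrite (eq_integral ((fun x => (g x)%:E) \_ (h n @^-1` [set r]))); last first.
    by move=> x xE; rewrite epatch_indic.
  rewrite -integral_mkcondr integral_indic// setIC -numu//.
  exact: measurableI.
- apply: emeasurable_funM; first exact/measurable_EFinP.
  exact/measurable_funTS/mgE.
- by move=> t Et; rewrite mule_ge0 ?lee_fin.
- by move: rhn; rewrite inE => -[t _ <-]; rewrite lee_fin.
Qed.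

Lemma int_mrestr d (O : measurableType d) (R : realType)
  (P : {measure set O -> \bar R}) (S : set O) (mS : measurable S)
  (f : O -> \bar R) E : (forall x, 0 <= f x) -> measurable E -> measurable_fun E f ->
  \int[mrestr P mS]_(x in E) f x = \int[P]_(x in E `&` S) f x.
Proof.
move=> f0 mE mf.
have g0 : forall x, (0 <= \1_S x :> R)%R.
  by move=> x; rewrite /indic; case: (x \in S).
have mg : measurable_fun setT (\1_S : O -> R) by exact: measurable_indic.
have numu : forall A, measurable A -> mrestr P mS A = \int[P]_(x in A) (\1_S x)%:E.
  by move=> A mA; rewrite integral_indic // /mrestr setIC.
rewrite -(@dens_cov _ _ _ (mrestr P mS) P (\1_S) g0 mg numu f E f0 mE mf).
rewrite integral_mkcondr; apply: eq_integral => x _.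
by rewrite epatch_indic.
Qed.

Lemma key d dV (O : measurableType d) (V : measurableType dV) (R : realType)
  (P : {measure set O -> \bar R}) (U : O -> V) (mU : measurable_fun setT U)
  (S1 S2 : set O) (mS1 : measurable S1) (mS2 : measurable S2) (g : V -> R) :
  (forall y, 0 <= g y)%R -> measurable_fun setT g ->
  (forall B, measurable B -> P (U @^-1` B `&` S1) =
     \int[P]_(w in U @^-1` B `&` S2) (g (U w))%:E) ->
  forall f : V -> \bar R, (forall y, 0 <= f y) -> measurable_fun setT f ->
  \int[P]_(w in S1) f (U w) = \int[P]_(w in S2) (f (U w) * (g (U w))%:E).
Proof.
move=> g0 mg hyp f f0 mf.
pose U' : {mfun O >-> V} := HB.pack U (isMeasurableFun.Build _ _ _ _ _ mU).
have mUB B : measurable B -> measurable (U @^-1` B).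
  by move=> mB; rewrite -[X in measurable X]setTI; apply: (mU measurableT).
have E1 (S : set O) (mS : measurable S) (h : V -> \bar R) B :
    (forall y, 0 <= h y) -> measurable_fun setT h -> measurable B ->
    \int[pushforward (mrestr P mS) U']_(y in B) h y =
    \int[P]_(w in U @^-1` B `&` S) h (U w).
  move=> h0 mh mB.
  rewrite (@ge0_integral_pushforward _ _ _ _ _ U' mU) //.
  - rewrite int_mrestr //.
    + by move=> x; exact: h0.
    + exact: mUB.
    + apply: measurable_funS (measurableT_comp mh mU) => //.
  - exact: measurable_funS mh.
have mgE : measurable_fun setT (fun y => (g y)%:E) by exact/measurable_EFinP.
have numu : forall A, measurable A -> pushforward (mrestr P mS1) U' A =
    \int[pushforward (mrestr P mS2) U']_(x in A) (g x)%:E.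
  move=> A mA; rewrite E1 // ?lee_fin//.
  exact: hyp.
have := @dens_cov _ _ _ (pushforward (mrestr P mS1) U') (pushforward (mrestr P mS2) U')
  g g0 mg.
move=> /(_ mU mU numu f setT f0 measurableT mf).
rewrite !E1 //.
- by rewrite preimage_setT !setTI => <-.
- by move=> y; rewrite mule_ge0 // lee_fin.
- exact: emeasurable_funM.
Qed.

Section KeyLemmas.
Context d dV (O : measurableType d) (V : measurableType dV) (R : realType)
  (P : probability O R) (U : O -> V) (mU : measurable_fun setT U).

Definition khyp (S1 S2 : set O) (g : V -> R) :=
  forall B, measurable B -> P (U @^-1` B `&` S1) =
     \int[P]_(w in U @^-1` B `&` S2) (g (U w))%:E.

Lemma mUB B : measurable B -> measurable (U @^-1` B).
Proof. by move=> mB; rewrite -[X in measurable X]setTI; apply: (mU measurableT). Qed.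

Lemma key_int (S1 S2 : set O) (mS1 : measurable S1) (mS2 : measurable S2)
  (g : V -> R) : (forall y, 0 <= g y)%R -> measurable_fun setT g ->
  khyp S1 S2 g -> forall f : V -> R, measurable_fun setT f ->
  P.-integrable S1 (fun w => (f (U w))%:E) <->
  P.-integrable S2 (fun w => (f (U w) * g (U w))%:E).
Proof.
move=> g0 mg hyp f mf.
have mfU : measurable_fun setT (f \o U) by exact: measurableT_comp.
have mgU : measurable_fun setT (g \o U) by exact: measurableT_comp.
have mabs : measurable_fun setT (fun y => `|f y|%:E).
  apply/measurable_EFinP; exact: measurableT_comp.
have abs0 : forall y, 0 <= `|f y|%:E by move=> y; rewrite lee_fin.
have H := @key _ _ _ _ _ P U mU S1 S2 mS1 mS2 g g0 mg hyp _ abs0 mabs.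
have E : forall w, `|(f (U w) * g (U w))%:E| = `|f (U w)|%:E * (g (U w))%:E.
  by move=> w; rewrite abse_EFin normrM (ger0_norm (g0 _)).
split => /integrableP [_ fin]; apply/integrableP; split.
- apply/measurable_EFinP; apply: measurable_funTS.
  exact: measurable_funM.
- under eq_integral do rewrite E.
  by rewrite -H; under eq_integral do rewrite -abse_EFin.
- apply/measurable_EFinP; exact: measurable_funTS.
- under eq_integral do rewrite abse_EFin.
  rewrite H; under eq_integral do rewrite -E.
  exact: fin.
Qed.

Lemma key_eq (S1 S2 : set O) (mS1 : measurable S1) (mS2 : measurable S2)
  (g : V -> R) : (forall y, 0 <= g y)%R -> measurable_fun setT g ->
  khyp S1 S2 g -> forall f : V -> R, measurable_fun setT f ->
  P.-integrable S1 (fun w => (f (U w))%:E) ->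
  \int[P]_(w in S1) (f (U w))%:E = \int[P]_(w in S2) (f (U w) * g (U w))%:E.
Proof.
move=> g0 mg hyp f mf _.
have mfE : measurable_fun setT (EFin \o f) by exact/measurable_EFinP.
rewrite integralE [RHS]integralE.
have H1 := @key _ _ _ _ _ P U mU S1 S2 mS1 mS2 g g0 mg hyp
  (fun y => (EFin \o f)^\+ y) (fun y => funepos_ge0 _ y) (measurable_funepos mfE).
have H2 := @key _ _ _ _ _ P U mU S1 S2 mS1 mS2 g g0 mg hyp
  (fun y => (EFin \o f)^\- y) (fun y => funeneg_ge0 _ y) (measurable_funeneg mfE).
congr (_ - _).
- transitivity (\int[P]_(w in S1) (EFin \o f)^\+ (U w)).
    by apply: eq_integral => w _; rewrite ?funeposE ?funenegE.
  rewrite H1; apply: eq_integral => w _.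
  by rewrite !funeposE /= maxe_pMl // ?lee_fin // mul0e.
- transitivity (\int[P]_(w in S1) (EFin \o f)^\- (U w)).
    by apply: eq_integral => w _; rewrite ?funeposE ?funenegE.
  rewrite H2; apply: eq_integral => w _.
  by rewrite !funenegE /= maxe_pMl // ?lee_fin // mul0e -EFinM mulNr.
Qed.

Lemma keyR (S1 S2 : set O) (g : V -> R) (C : set V) : measurable C ->
  khyp S1 S2 g -> khyp (S1 `&` U @^-1` C) (S2 `&` U @^-1` C) g.
Proof.
move=> mC hyp B mB.
have E : forall S, U @^-1` B `&` (S `&` U @^-1` C) = U @^-1` (B `&` C) `&` S.
  move=> S; apply/seteqP; split => w /=; tauto.
rewrite !E; apply: hyp; exact: measurableI.
Qed.

Lemma keyC (S1 S1' S2 : set O) (mS1 : measurable S1) (mS1' : measurable S1')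
  (mS2 : measurable S2) (g : V -> R) :
  (forall y, 0 <= g y <= 1)%R -> measurable_fun setT g ->
  S1 `&` S1' = set0 -> S1 `|` S1' = S2 ->
  khyp S1 S2 g -> khyp S1' S2 (fun y => 1 - g y)%R.
Proof.
move=> g01 mg dis uni hyp B mB.
have mA := mUB mB.
set A := U @^-1` B.
have e1 : P (A `&` S2) = P (A `&` S1) + P (A `&` S1').
  rewrite -uni setIUr measureU //; try exact: measurableI.
  by rewrite setIACA dis setI0.
have e2 : \int[P]_(w in A `&` S2) (1 - g (U w))%:E +
    \int[P]_(w in A `&` S2) (g (U w))%:E = P (A `&` S2).
  rewrite -ge0_integralD //; first last.
  - apply/measurable_EFinP; apply: measurable_funTS; exact: measurableT_comp.
  - by move=> w _; rewrite lee_fin; case/andP: (g01 (U w)).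
  - apply/measurable_EFinP; apply: measurable_funTS.
    apply: measurable_funB => //; exact: measurableT_comp.
  - by move=> w _; rewrite lee_fin subr_ge0; case/andP: (g01 (U w)).
  - exact: measurableI.
  under eq_integral do rewrite -EFinD subrK.
  by rewrite integral_cst ?mul1e //; exact: measurableI.
have fin : P (A `&` S1) \is a fin_num.
  rewrite ge0_fin_numE ?measure_ge0 //.
  by rewrite (le_lt_trans (probability_le1 _ _)) ?ltry //; exact: measurableI.
move: e2; rewrite e1 -hyp // [X in _ = X]addeC.
move=> /(congr1 (fun z => z - P (A `&` S1))).
by rewrite !addeK // => ->.
Qed.

Lemma mkhyp (S2 : set O) (b : O -> bool) (g : V -> R) :
  measurable S2 -> measurable_fun setT b ->
  (forall B, measurable B ->
    \int[P]_(w in U @^-1` B `&` S2) (b w)%:R%:E =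
    \int[P]_(w in U @^-1` B `&` S2) (g (U w))%:E) ->
  khyp (S2 `&` [set w | b w]) S2 g.
Proof.
move=> mS2 mb hyp B mB.
have mb1 : measurable [set w | b w].
  by rewrite -[X in measurable X]setTI; apply: (mb measurableT [set true]).
rewrite -hyp // setIA.
rewrite (eq_integral (fun w => (\1_[set w | b w] w)%:E)); last first.
  move=> w _; rewrite indicE /=.
  by have -> : (w \in [set w0 | b w0]) = b w by apply/idP/idP => [/set_mem|/mem_set].
rewrite integral_indic // 1?setIC //.
apply: measurableI => //; exact: mUB mB.
Qed.

End KeyLemmas.

End HelpersL.

Section HelpersM.
Import numFieldNormedType.Exports.
Local Set Implicit Arguments. Local Unset Strict Implicit.

Lemma measurable_inv (R : realType) : measurable_fun setT (@GRing.inv R).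
Proof.
have oD : open (~` [set x : R | x = 0]) by rewrite openC; exact: closed_eq.
have mD : measurable_fun (~` [set x : R | x = 0]) (@GRing.inv R).
  apply: open_continuous_measurable_fun => // x.
  rewrite inE /= => /eqP x0; exact: inv_continuous.
rewrite (_ : GRing.inv = fun x : R => if x == 0 then 0 else x^-1); last first.
  by apply/funext => x; case: eqP => // ->; rewrite invr0.
have meq : measurable_fun setT (fun x : R => x == 0).
  by apply: measurable_fun_eqr; [exact: measurable_id|exact: measurable_cst].
apply: measurable_fun_if => //.
- rewrite setTI; apply: measurable_funS mD => //.
  + exact: open_measurable.
  + by move=> x /= H; apply/eqP; rewrite H.
Qed.

Lemma measurable_funV d (T : measurableType d) (R : realType) (D : set T) (f : T -> R) :
  measurable_fun D f -> measurable_fun D (fun x => (f x)^-1).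
Proof. by move=> mf; apply: measurable_comp (@measurable_inv R) mf. Qed.

Lemma mfun_pair d dR (T : measurableType d) (Rt : measurableType dR) (f : T * bool -> Rt) :
  measurable_fun setT (fun x => f (x, true)) ->
  measurable_fun setT (fun x => f (x, false)) -> measurable_fun setT f.
Proof.
move=> m1 m0.
rewrite (_ : f = fun z => if z.2 then f (z.1, true) else f (z.1, false)).
  exact: (@measurable_fun_if_pair _ _ _ _ (fun x => f (x, true)) (fun x => f (x, false)) m1 m0).
by apply/funext => -[x []].
Qed.

Section ModelMeas.
Context {R : realType} {d k : nat} (T : d.-tuple R -> k.-tuple R)
  (mT : measurable_fun setT T).

Lemma m_dotk (b : k.-tuple R) : measurable_fun setT (fun x => dotk b (T x)).
Proof.
rewrite /dotk; apply: measurable_sum => i; apply: measurable_funM.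
  exact: measurable_cst.
exact: measurableT_comp (measurable_tnth i) mT.
Qed.

Lemma m_omega1 th y : measurable_fun setT (fun x => omega T th x y).
Proof.
rewrite /omega; apply: measurableT_comp; first exact: measurable_expR.
apply: measurable_funD; [exact: measurable_cst | exact: m_dotk].
Qed.

Lemma m_omega th :
  measurable_fun setT (fun z : d.-tuple R * bool => omega T th z.1 z.2).
Proof. by apply: mfun_pair => /=; exact: m_omega1. Qed.

Lemma m_gamma1 th : measurable_fun setT (gamma1 T th).
Proof.
rewrite /gamma1; apply: measurable_funD; first exact: measurable_cst.
apply: measurable_funB; exact: m_dotk.
Qed.

Lemma m_m0 th (e : d.-tuple R -> R) : measurable_fun setT e ->
  measurable_fun setT (m0 T th e).
Proof.
move=> me; rewrite /m0.
have mg : measurable_fun setT (fun x => expR (gamma1 T th x)).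
  by apply: measurableT_comp; [exact: measurable_expR|exact: m_gamma1].
apply: measurable_funM; first exact: measurable_funM.
apply: measurable_funV; apply: measurable_funB => //.
apply: measurable_funD; [exact: measurable_funM | exact: measurable_cst].
Qed.

End ModelMeas.

End HelpersM.

Section HelpersL2.
Local Open Scope ereal_scope.
Local Set Implicit Arguments. Local Unset Strict Implicit.

Lemma int_split d (O : measurableType d) (R : realType) (P : {measure set O -> \bar R})
  (S S1 S0 : set O) (f : O -> \bar R) : measurable S1 -> measurable S0 ->
  S1 `&` S0 = set0 -> S1 `|` S0 = S -> measurable_fun S f ->
  \int[P]_(w in S) f w = \int[P]_(w in S1) f w + \int[P]_(w in S0) f w.
Proof.
move=> m1 m0 dis uni mf; rewrite -uni integral_setU //.
- by rewrite uni.
- exact/disj_set2P.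
Qed.

Section Rsplit.
Context d dV (O : measurableType d) (V : measurableType dV) (R : realType)
  (P : probability O R) (U : O -> V) (mU : measurable_fun setT U).

Lemma Rsplit (S1 S0 : set O) (mS1 : measurable S1) (mS0 : measurable S0)
  (p : V -> R) : S1 `&` S0 = set0 -> S1 `|` S0 = setT ->
  (forall y, 0 <= p y <= 1)%R -> measurable_fun setT p ->
  khyp P U S1 setT p ->
  forall (H : O -> R) (G1 G0 : V -> R), measurable_fun setT G1 -> measurable_fun setT G0 ->
  P.-integrable setT (fun w => (H w)%:E) ->
  (forall w, S1 w -> H w = G1 (U w)) -> (forall w, S0 w -> H w = G0 (U w)) ->
  P.-integrable setT (fun w => (p (U w) * G1 (U w) + (1 - p (U w)) * G0 (U w))%:E) /\
  \int[P]_w (H w)%:E =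
  \int[P]_w (p (U w) * G1 (U w) + (1 - p (U w)) * G0 (U w))%:E.
Proof.
move=> dis uni p01 mp hyp1 H G1 G0 mG1 mG0 iH H1 H0.
have p0 : forall y, (0 <= p y)%R by move=> y; case/andP: (p01 y).
have q0 : forall y, (0 <= 1 - p y)%R by move=> y; case/andP: (p01 y); rewrite subr_ge0.
have mq : measurable_fun setT (fun y => 1 - p y)%R.
  by apply: measurable_funB => //; exact: measurable_cst.
have hyp0 : khyp P U S0 setT (fun y => 1 - p y)%R.
  exact: (keyC mU mS1 mS0 measurableT p01 mp dis uni hyp1).
have iH1 : P.-integrable S1 (fun w => (G1 (U w))%:E).
  apply: (eq_integrable _ (fun w => (H w)%:E)) => //.
    by move=> w; rewrite inE => /H1 ->.
  by apply: integrableS iH.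
have iH0 : P.-integrable S0 (fun w => (G0 (U w))%:E).
  apply: (eq_integrable _ (fun w => (H w)%:E)) => //.
    by move=> w; rewrite inE => /H0 ->.
  by apply: integrableS iH.
have j1 := (key_int mU mS1 measurableT p0 mp hyp1 mG1).1 iH1.
have j0 := (key_int mU mS0 measurableT q0 mq hyp0 mG0).1 iH0.
have e1 := key_eq mU mS1 measurableT p0 mp hyp1 mG1 iH1.
have e0 := key_eq mU mS0 measurableT q0 mq hyp0 mG0 iH0.
have E : forall w, (p (U w) * G1 (U w) + (1 - p (U w)) * G0 (U w))%:E =
   (G1 (U w) * p (U w))%:E + (G0 (U w) * (1 - p (U w)))%:E.
  by move=> w; rewrite -EFinD mulrC [X in (_ + X)%R]mulrC.
split.
  apply: (eq_integrable measurableT (fun w => (G1 (U w) * p (U w))%:E + (G0 (U w) * (1 - p (U w)))%:E)).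
    by move=> w _; rewrite E.
  exact: (integrableD measurableT j1 j0).
under [RHS]eq_integral do rewrite E.
rewrite (integralD measurableT j1 j0) -e1 -e0.
rewrite (int_split _ mS1 mS0 dis uni); last by case/integrableP: iH.
congr (_ + _); apply: eq_integral => w; rewrite inE.
- by move/H1 ->.
- by move/H0 ->.
Qed.

Lemma Ysplit (S0 S0Y S0N : set O) (mS0 : measurable S0) (mS0Y : measurable S0Y)
  (mS0N : measurable S0N) (m : V -> R) : S0Y `&` S0N = set0 -> S0Y `|` S0N = S0 ->
  (forall y, 0 <= m y <= 1)%R -> measurable_fun setT m ->
  khyp P U S0Y S0 m ->
  forall (H : O -> R) (D : V -> R), measurable_fun setT D ->
  P.-integrable S0 (fun w => (H w)%:E) ->
  (forall w, S0Y w -> H w = D (U w) * (1 - m (U w)))%R ->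
  (forall w, S0N w -> H w = - (D (U w) * m (U w)))%R ->
  \int[P]_(w in S0) (H w)%:E = 0.
Proof.
move=> dis uni m01 mm hyp1 H D mD iH H1 H0.
have p0 : forall y, (0 <= m y)%R by move=> y; case/andP: (m01 y).
have q0 : forall y, (0 <= 1 - m y)%R by move=> y; case/andP: (m01 y); rewrite subr_ge0.
have mq : measurable_fun setT (fun y => 1 - m y)%R.
  by apply: measurable_funB => //; exact: measurable_cst.
have hyp0 : khyp P U S0N S0 (fun y => 1 - m y)%R.
  exact: (keyC mU mS0Y mS0N mS0 m01 mm dis uni hyp1).
have mF1 : measurable_fun setT (fun y => D y * (1 - m y))%R by exact: measurable_funM.
have mF0 : measurable_fun setT (fun y => - (D y * m y))%R.
  by apply: measurable_funN; exact: measurable_funM.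
have sub1 : S0Y `<=` S0 by rewrite -uni; exact: subsetUl.
have sub0 : S0N `<=` S0 by rewrite -uni; exact: subsetUr.
have iH1 : P.-integrable S0Y (fun w => (D (U w) * (1 - m (U w)))%:E).
  apply: (eq_integrable mS0Y (fun w => (H w)%:E)).
    by move=> w; rewrite inE => /H1 ->.
  exact: integrableS iH.
have iH0 : P.-integrable S0N (fun w => (- (D (U w) * m (U w)))%:E).
  apply: (eq_integrable mS0N (fun w => (H w)%:E)).
    by move=> w; rewrite inE => /H0 ->.
  exact: integrableS iH.
have j1 := (key_int mU mS0Y mS0 p0 mm hyp1 mF1).1 iH1.
have j0 := (key_int mU mS0N mS0 q0 mq hyp0 mF0).1 iH0.
have e1 := key_eq mU mS0Y mS0 p0 mm hyp1 mF1 iH1.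
have e0 := key_eq mU mS0N mS0 q0 mq hyp0 mF0 iH0.
rewrite (int_split _ mS0Y mS0N dis uni); last by case/integrableP: iH.
have -> : \int[P]_(w in S0Y) (H w)%:E = \int[P]_(w in S0Y) (D (U w) * (1 - m (U w)))%:E.
  by apply: eq_integral => w; rewrite inE => /H1 ->.
have -> : \int[P]_(w in S0N) (H w)%:E = \int[P]_(w in S0N) (- (D (U w) * m (U w)))%:E.
  by apply: eq_integral => w; rewrite inE => /H0 ->.
rewrite e1 e0 -(integralD mS0 j1 j0).
rewrite (eq_integral (cst 0)) ?integral0 // => w _.
by rewrite /= -EFinD; congr (_%:E); ring.
Qed.
End Rsplit.

End HelpersL2.

Lemma mset_b {d} {O : measurableType d} {b : O -> bool} :
  measurable_fun setT b -> measurable [set w | b w] /\ measurable [set w | ~~ b w].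
Proof.
move=> mb; split.
  by rewrite -[X in measurable X]setTI; apply: (mb measurableT [set true]).
rewrite (_ : [set w | ~~ b w] = b @^-1` [set false]).
  by rewrite -[X in measurable X]setTI; apply: (mb measurableT [set false]).
by apply/seteqP; split => w /=; case: (b w).
Qed.

Theorem theorem1 (R : realType) (dO : measure_display) (Omega : measurableType dO)
  (P : probability Omega R) (d k : nat)
  (X : Omega -> d.-tuple R) (Y Rv : Omega -> bool)
  (pR pY : d.-tuple R -> bool -> R)
  (T : d.-tuple R -> k.-tuple R)
  (Xi : Type) (eta1 : Xi -> d.-tuple R -> R)
  (tau : d.-tuple R -> bool -> R)
  (thS : param R k) (xiS : Xi) :
  let pr1 := fine (P [set w | Rv w]) in
  let pr0 := fine (P [set w | ~~ Rv w]) in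
  let XY := fun w => (X w, Y w) in
  let XR := fun w => (X w, Rv w) in
  let wIW0 := fun w => (Rv w)%:R / pr1 * omega T thS (X w) (Y w)
                       - (1 - (Rv w)%:R) / pr0 in
  let wIW := fun w => (Rv w)%:R / eta_r T pr1 pr0 thS (X w) (Y w) - 1 in
  let res := fun w => tau (X w) (Y w) - m0tau T tau thS (eta1 xiS) (X w) in
  (* random triple (X,Y,R) *)
  measurable_fun setT X -> measurable_fun setT Y -> measurable_fun setT Rv ->
  (* 0 < P(R=1) < 1 *)
  0 < pr1 < 1 ->
  (* versions of P(R=1|X=x,Y=y) and P(Y=1|X=x,R=r), all conditional
     probabilities in (0,1) *)
  cexp_version P (fun w => (Rv w)%:R) XY (fun z => pR z.1 z.2) ->
  cexp_version P (fun w => (Y w)%:R) XR (fun z => pY z.1 z.2) ->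
  (forall x y, 0 < pR x y < 1) -> (forall x r, 0 < pY x r < 1) ->
  (* T measurable, eta_1(.;xi) measurable into (0,1) *)
  measurable_fun setT T ->
  (forall xi, measurable_fun setT (eta1 xi)) ->
  (forall xi x, 0 < eta1 xi x < 1) ->
  measurable_fun setT (fun z : d.-tuple R * bool => tau z.1 z.2) ->
  (* all expectations finite *)
  P.-integrable setT (fun w => (tau (X w) (Y w))%:E) ->
  P.-integrable setT (fun w => (m0tau T tau thS (eta1 xiS) (X w))%:E) ->
  P.-integrable setT (fun w => (wIW0 w * tau (X w) (Y w))%:E) ->
  P.-integrable setT (fun w => (wIW w * tau (X w) (Y w))%:E) ->
  P.-integrable setT (fun w => (wIW0 w * res w)%:E) ->
  P.-integrable setT (fun w => (wIW w * res w)%:E) ->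
  (* (i) E[R | X,Y] = eta_r(X,Y;thetaS) *)
  (cexp_version P (fun w => (Rv w)%:R) XY
     (fun z => eta_r T pr1 pr0 thS z.1 z.2) ->
   (\int[P]_w (wIW0 w * tau (X w) (Y w))%:E = 0)%E /\
   (\int[P]_w (wIW w * tau (X w) (Y w))%:E = 0)%E /\
   (\int[P]_w (wIW0 w * res w)%:E = 0)%E /\
   (\int[P]_w (wIW w * res w)%:E = 0)%E) /\
  (* (ii) gamma(1|x) = gamma(1|x;thetaS) for all x and
          E[Y | X, R=0] = m_0(X;thetaS,xiS) *)
  ((forall x, gamma_true pR x = gamma1 T thS x) ->
   (forall A : set (d.-tuple R), measurable A ->
      (\int[P]_(w in X @^-1` A `&` [set w | ~~ Rv w]) (Y w)%:R%:E =
       \int[P]_(w in X @^-1` A `&` [set w | ~~ Rv w])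
          (m0 T thS (eta1 xiS) (X w))%:E)%E) ->
   (\int[P]_w (wIW0 w * res w)%:E = 0)%E /\
   (\int[P]_w (wIW w * res w)%:E = 0)%E).
Proof.
move=> pr1 pr0 XY XR wIW0 wIW res mX mY mRv /andP[pr1_gt0 pr1_lt1] [mpR HpR] _
  pR01 _ mT meta eta01 mtau itau im0tau iW0tau iWtau iW0res iWres.
have [mS1 mS0] := mset_b mRv.
have [mSY mSN] := mset_b mY.
set S1 := [set w | Rv w] in mS1 *.
set S0 := [set w | ~~ Rv w] in mS0 *.
have S0C : S0 = ~` S1.
  by apply/seteqP; split => w; rewrite /S0 /S1 /=; case: (Rv w) => // /(_ erefl).
have mXY : measurable_fun setT XY by rewrite /XY; exact: measurable_fun_pair.
have fin1 : P S1 \is a fin_num.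
  by rewrite ge0_fin_numE ?measure_ge0 // (le_lt_trans (probability_le1 _ _)) ?ltry.
have pr0E : pr0 = 1 - pr1.
  by rewrite /pr0 -/S0 S0C probability_setC // fineB.
have pr0_gt0 : 0 < pr0 by rewrite pr0E subr_gt0.
have dis10 : S1 `&` S0 = set0.
  by apply/seteqP; split => w //; rewrite /S0 /S1 /= => -[-> ].
have uni10 : S1 `|` S0 = setT.
  by apply/seteqP; split => w // _; rewrite /S0 /S1 /=; case: (Rv w); [left|right].
have pr1_neq0 : pr1 != 0 by rewrite gt_eqF.
have pr0_neq0 : pr0 != 0 by rewrite gt_eqF.
have om_gt0 : forall x y, 0 < omega T thS x y by move=> x y; exact: expR_gt0.
have mtaub : forall b, measurable_fun setT (fun x => tau x b).
  by move=> b; exact: (measurable_fun_pair1 b mtau).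
have mm0 : measurable_fun setT (m0 T thS (eta1 xiS)) by exact: m_m0.
have mm0tau : measurable_fun setT (m0tau T tau thS (eta1 xiS)).
  rewrite /m0tau; apply: measurable_funD => //.
  apply: measurable_funM => //; exact: measurable_funB.
have mFres : measurable_fun setT
    (fun z : d.-tuple R * bool => tau z.1 z.2 - m0tau T tau thS (eta1 xiS) z.1).
  apply: measurable_funB => //; exact: measurableT_comp mm0tau measurable_fst.
have mom := m_omega mT thS.
have WW : forall F : d.-tuple R * bool -> R,
    P.-integrable setT (fun w => (wIW0 w * F (XY w))%:E) ->
    (\int[P]_w (wIW w * F (XY w))%:E = pr0%:E * \int[P]_w (wIW0 w * F (XY w))%:E)%E.
  move=> F iF; rewrite -integralZl //; apply: eq_integral => w _.
  rewrite -EFinM; congr EFin; rewrite /wIW /wIW0 /eta_r.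
  have := om_gt0 (X w) (Y w); set om := omega T thS (X w) (Y w) => omp.
  have dpos : pr1 + om * pr0 != 0 by rewrite gt_eqF // addr_gt0 // mulr_gt0.
  by case: (Rv w) => /=; field; rewrite ?pr0_neq0 ?pr1_neq0 ?dpos.
split.
  case=> mEta HEta.
  have hE : khyp P XY S1 setT (fun z => eta_r T pr1 pr0 thS z.1 z.2).
    have := mkhyp (P:=P) (g:=fun z => eta_r T pr1 pr0 thS z.1 z.2) mXY measurableT mRv.
    rewrite setTI; apply => B mB; rewrite setIT; exact: HEta.
  have eta01' : forall z : d.-tuple R * bool, 0 <= eta_r T pr1 pr0 thS z.1 z.2 <= 1.
    move=> z; rewrite /eta_r; have omp := om_gt0 z.1 z.2.
    have dp : 0 < pr1 + omega T thS z.1 z.2 * pr0 by rewrite addr_gt0 // mulr_gt0.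
    apply/andP; split; first by rewrite divr_ge0 // ltW.
    by rewrite ler_pdivrMr // mul1r lerDl mulr_ge0 // ltW.
  have W0 : forall F : d.-tuple R * bool -> R, measurable_fun setT F ->
      P.-integrable setT (fun w => (wIW0 w * F (XY w))%:E) ->
      (\int[P]_w (wIW0 w * F (XY w))%:E = 0)%E.
    move=> F mF iF.
    have mG1 : measurable_fun setT (fun z => pr1^-1 * omega T thS z.1 z.2 * F z).
      by apply: measurable_funM => //; apply: measurable_funM => //; exact: measurable_cst.
    have mG0 : measurable_fun setT (fun z => - (pr0^-1 * F z)).
      by apply: measurable_funN; apply: measurable_funM => //; exact: measurable_cst.
    have H1 : forall w, S1 w -> wIW0 w * F (XY w) = pr1^-1 * omega T thS (XY w).1 (XY w).2 * F (XY w).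
      move=> w; rewrite /S1 /= => Rw; rewrite /wIW0 Rw /=; ring.
    have H0 : forall w, S0 w -> wIW0 w * F (XY w) = - (pr0^-1 * F (XY w)).
      move=> w; rewrite /S0 /= => /negbTE Rw; rewrite /wIW0 Rw /=; ring.
    have [_ ->] := Rsplit mXY mS1 mS0 dis10 uni10 eta01' mEta hE mG1 mG0 iF H1 H0.
    rewrite (eq_integral (cst 0%E)) ?integral0 // => w _ /=.
    congr EFin; rewrite /eta_r.
    have := om_gt0 (X w) (Y w); set om := omega T thS (X w) (Y w) => omp.
    have dpos : pr1 + om * pr0 != 0 by rewrite gt_eqF // addr_gt0 // mulr_gt0.
    by field; rewrite ?pr0_neq0 ?pr1_neq0 ?dpos.
  have W : forall F : d.-tuple R * bool -> R, measurable_fun setT F ->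
      P.-integrable setT (fun w => (wIW0 w * F (XY w))%:E) ->
      (\int[P]_w (wIW w * F (XY w))%:E = 0)%E.
    by move=> F mF iF; rewrite WW // W0 // mule0.
  split; first exact: (W0 (fun z => tau z.1 z.2) mtau iW0tau).
  split; first exact: (W (fun z => tau z.1 z.2) mtau iW0tau).
  split; first exact: (W0 _ mFres iW0res).
  exact: (W _ mFres iW0res).
move=> Hgam Hm0.
set m0f := m0 T thS (eta1 xiS).
set Fres := fun z : d.-tuple R * bool => tau z.1 z.2 - m0tau T tau thS (eta1 xiS) z.1.
have hR : khyp P XY S1 setT (fun z => pR z.1 z.2).
  have := mkhyp (P:=P) (g:=fun z => pR z.1 z.2) mXY measurableT mRv.
  rewrite setTI; apply => B mB; rewrite setIT; exact: HpR.
have pRz01 : forall z : d.-tuple R * bool, 0 <= pR z.1 z.2 <= 1.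
  by move=> z; case/andP: (pR01 z.1 z.2) => a b; rewrite !ltW.
have q0 : forall z : d.-tuple R * bool, 0 <= 1 - pR z.1 z.2.
  by move=> z; case/andP: (pRz01 z) => _; rewrite subr_ge0.
have mq : measurable_fun setT (fun z : d.-tuple R * bool => 1 - pR z.1 z.2).
  by apply: measurable_funB => //; exact: measurable_cst.
have h0 : khyp P XY S0 setT (fun z => 1 - pR z.1 z.2).
  exact: (keyC mXY mS1 mS0 measurableT pRz01 mpR dis10 uni10 hR).
have mpRb : forall b, measurable_fun setT (fun x => pR x b).
  by move=> b; exact: (measurable_fun_pair1 b mpR).
pose h x := tau x true - tau x false.
pose c x := omega T thS x false * pR x false / (1 - pR x false).
pose Dd x := (c x / pr1 - pr0^-1) * h x.
pose L (z : d.-tuple R * bool) := Dd z.1 * ((z.2)%:R - m0f z.1).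
have mDd : measurable_fun setT Dd.
  apply: measurable_funM; last by apply: measurable_funB.
  apply: measurable_funB; last exact: measurable_cst.
  apply: measurable_funM; last exact: measurable_cst.
  apply: measurable_funM; first by apply: measurable_funM => //; exact: m_omega1.
  apply: measurable_funV; apply: measurable_funB => //; exact: measurable_cst.
have mL : measurable_fun setT L.
  apply: mfun_pair => /=; apply: measurable_funM => //;
    apply: measurable_funB => //; exact: measurable_cst.
have ratio_gt0 : forall x, 0 < (1 - pR x true) * pR x false / (pR x true * (1 - pR x false)).
  move=> x; case/andP: (pR01 x true) => a1 b1; case/andP: (pR01 x false) => a0 b0.
  by rewrite divr_gt0 // mulr_gt0 // subr_gt0.
have omrel : forall x, omega T thS x true = omega T thS x false *
    ((1 - pR x true) * pR x false / (pR x true * (1 - pR x false))).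
  move=> x; rewrite -[X in _ * X]lnK ?posrE // -[ln _]/(gamma_true pR x) Hgam.
  by rewrite /omega -expRD; congr expR; rewrite /gamma1 /=; ring.
have W0 : (\int[P]_w (wIW0 w * res w)%:E = 0)%E.
  have mG1 : measurable_fun setT (fun z => pr1^-1 * omega T thS z.1 z.2 * Fres z).
    by apply: measurable_funM => //; apply: measurable_funM => //; exact: measurable_cst.
  have mG0 : measurable_fun setT (fun z => - (pr0^-1 * Fres z)).
    by apply: measurable_funN; apply: measurable_funM => //; exact: measurable_cst.
  have H1 : forall w, S1 w -> wIW0 w * res w = pr1^-1 * omega T thS (XY w).1 (XY w).2 * Fres (XY w).
    move=> w; rewrite /S1 /= => Rw; rewrite /wIW0 /res /Fres /XY Rw /=; ring.
  have H0 : forall w, S0 w -> wIW0 w * res w = - (pr0^-1 * Fres (XY w)).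
    move=> w; rewrite /S0 /= => /negbTE Rw; rewrite /wIW0 /res /Fres /XY Rw /=; ring.
  have [iK ->] := Rsplit mXY mS1 mS0 dis10 uni10 pRz01 mpR hR mG1 mG0 iW0res H1 H0.
  have KL : forall z, pR z.1 z.2 * (pr1^-1 * omega T thS z.1 z.2 * Fres z) +
      (1 - pR z.1 z.2) * - (pr0^-1 * Fres z) = L z * (1 - pR z.1 z.2).
    move=> [x b] /=; rewrite /Fres /L /Dd /c /h /m0tau /m0f /=.
    case/andP: (pR01 x true) => a1 b1; case/andP: (pR01 x false) => a0 b0.
    have n1 : pR x true != 0 by rewrite gt_eqF.
    have n0 : 1 - pR x false != 0 by rewrite gt_eqF // subr_gt0.
    case: b => /=.
    - rewrite omrel; field; by rewrite ?n1 ?n0 ?pr0_neq0 ?pr1_neq0.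
    - field; by rewrite ?n1 ?n0 ?pr0_neq0 ?pr1_neq0.
  rewrite (eq_integral (fun w => (L (XY w) * (1 - pR (XY w).1 (XY w).2))%:E)); last first.
    by move=> w _; rewrite KL.
  have iK' : P.-integrable setT (fun w => (L (XY w) * (1 - pR (XY w).1 (XY w).2))%:E).
    by apply: (eq_integrable measurableT _ _ _ iK) => w _; rewrite KL.
  have iL := (key_int mXY mS0 measurableT q0 mq h0 mL).2 iK'.
  rewrite -(key_eq mXY mS0 measurableT q0 mq h0 mL iL).
  have hm0 : khyp P X (S0 `&` [set w | Y w]) S0 m0f.
    exact: (mkhyp (P:=P) (g:=m0f) mX mS0 mY Hm0).
  have m001 : forall x, 0 <= m0f x <= 1.
    move=> x; rewrite /m0f /m0; set E := expR _; set e := eta1 xiS x.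
    have Ep : 0 < E by exact: expR_gt0.
    case/andP: (eta01 xiS x) => e0 e1.
    have dp : 0 < E * e + 1 - e by rewrite -addrA addr_gt0 ?mulr_gt0 // subr_gt0.
    apply/andP; split; first by rewrite divr_ge0 // ltW // mulr_gt0.
    by rewrite ler_pdivrMr // mul1r -addrA lerDl subr_ge0 ltW.
  apply: (Ysplit mX mS0 (measurableI _ _ mS0 mSY) (measurableI _ _ mS0 mSN) _ _ m001 mm0 hm0 mDd iL).
  - apply/seteqP; split => w //; rewrite /S0 /= => -[[_ ->]] [_].
    by [].
  - apply/seteqP; split => w.
      by rewrite /S0 /= => -[[]|[]].
    by rewrite /S0 /= => Rw; case Yw: (Y w); [left|right].
  - by move=> w [_ /= Yw]; rewrite /L /XY /= Yw.
  - by move=> w [_ /= /negbTE Yw]; rewrite /L /XY /= Yw sub0r mulrN.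
have := WW Fres iW0res; rewrite W0 mule0 => WR.
by split.
Qed.
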